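(* Let $x\in\mathbb{R}$. Every real $y$ that is computable from $x$ can be expressed as a finite sum of reals each of which is Turing equivalent to $x$.
   Context: Turing reducibility between reals is the usual one (e.g. via binary/decimal expansions). *)

(* Defs.v *)
From Stdlib Require Import Reals ZArith List Lia.
Import ListNotations.
Open Scope R_scope.

Inductive prf : Type :=
| PZero : prf
| PSucc : prf
| PProj : nat -> prf
| POracle : prf
| PComp : prf -> list prf -> prf
| PPrimRec : prf -> prf -> prf
| PMu : prf -> prf.

Inductive peval (o : nat -> nat) : prf -> list nat -> nat -> Prop :=
| ev_zero v : peval o PZero v 0
| ev_succ n v : peval o PSucc (n :: v) (S n)
| ev_proj i v : (i < length v)%nat -> peval o (PProj i) v (nth i v 0%nat)
| ev_oracle n v : peval o POracle (n :: v) (o n)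
| ev_comp f gs v ws r :
    pevals o gs v ws -> peval o f ws r -> peval o (PComp f gs) v r
| ev_rec0 f g v r : peval o f v r -> peval o (PPrimRec f g) (0%nat :: v) r
| ev_recS f g n v a r :
    peval o (PPrimRec f g) (n :: v) a -> peval o g (n :: a :: v) r ->
    peval o (PPrimRec f g) (S n :: v) r
| ev_mu f v n :
    peval o f (n :: v) 0 ->
    (forall m, (m < n)%nat -> exists k, peval o f (m :: v) (S k)) ->
    peval o (PMu f) v n
with pevals (o : nat -> nat) : list prf -> list nat -> list nat -> Prop :=
| evs_nil v : pevals o [] v []
| evs_cons g gs v w ws :
    peval o g v w -> pevals o gs v ws -> pevals o (g :: gs) v (w :: ws).

Definition oracle_computable (g o : nat -> nat) : Prop :=
  exists c : prf, forall n : nat, peval o c [n] (g n).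

(* Reals as oracles: the binary expansion of x, given as the sequence      *)
(* n |-> floor(2^n * x) (integer part followed by the first n binary       *)
(* digits of the canonical expansion), coded into nat.                      *)

Definition nat_of_Z (z : Z) : nat :=
  if (0 <=? z)%Z then Z.to_nat (2 * z)%Z else Z.to_nat (- 2 * z - 1)%Z.

Definition real_oracle (x : R) : nat -> nat :=
  fun n => nat_of_Z (Int_part (x * 2 ^ n)).

Definition turing_le (y x : R) : Prop :=
  oracle_computable (real_oracle y) (real_oracle x).

Definition turing_equiv (y x : R) : Prop := turing_le y x /\ turing_le x y.

Fixpoint sum_list (l : list R) : R :=
  match l with [] => 0 | z :: l' => z + sum_list l' end.

(* Main.v *)
Require Import Defs.
From Stdlib Require Import Reals ZArith List Lia Lra Arith ZifyNat.
Import ListNotations.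

Lemma pe_proj o i v r : (i < length v)%nat -> r = nth i v 0%nat -> peval o (PProj i) v r.
Proof. intros H ->. now constructor. Qed.

Definition addP := PPrimRec (PProj 0) (PComp PSucc [PProj 1]).
Lemma addP_ok o a b : peval o addP [a; b] (a + b)%nat.
Proof.
  induction a.
  - constructor. apply pe_proj; simpl; auto.
  - eapply ev_recS. exact IHa. econstructor.
    + constructor. apply pe_proj; simpl; auto. constructor.
    + constructor.
Qed.

Definition predP := PPrimRec PZero (PProj 0).
Lemma predP_ok o a : peval o predP [a] (Nat.pred a).
Proof.
  destruct a.
  - constructor. constructor.
  - assert (H: exists r, peval o predP [a] r).
    { induction a. exists 0%nat. constructor. constructor.
      destruct IHa as [r Hr]. exists a. eapply ev_recS. exact Hr. apply pe_proj; simpl; auto; lia. }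
    destruct H as [r Hr]. eapply ev_recS. exact Hr. apply pe_proj; simpl; auto; lia.
Qed.

Definition subP' := PPrimRec (PProj 0) (PComp predP [PProj 1]).
Lemma subP'_ok o a b : peval o subP' [b; a] (a - b)%nat.
Proof.
  induction b.
  - constructor. apply pe_proj; simpl; auto; lia.
  - eapply ev_recS. exact IHb. econstructor.
    + constructor. apply pe_proj; simpl; auto; lia. constructor.
    + replace (a - S b)%nat with (Nat.pred (a - b)) by lia. apply predP_ok.
Qed.
Definition subP := PComp subP' [PProj 1; PProj 0].
Lemma subP_ok o a b : peval o subP [a; b] (a - b)%nat.
Proof.
  econstructor. constructor. apply pe_proj; simpl; auto; lia.
  constructor. apply pe_proj; simpl; auto; lia. constructor.
  apply subP'_ok.
Qed.

Definition ifzP := PPrimRec (PProj 0) (PProj 3).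
Lemma ifzP_ok o c a b : peval o ifzP [c; a; b] (match c with 0 => a | S _ => b end).
Proof.
  induction c.
  - constructor. apply pe_proj; simpl; auto; lia.
  - eapply ev_recS. exact IHc. apply pe_proj; simpl; auto; lia.
Qed.

Fixpoint constP (n : nat) : prf := match n with 0 => PZero | S m => PComp PSucc [constP m] end.
Lemma constP_ok o n v : peval o (constP n) v n.
Proof.
  induction n; simpl. constructor.
  econstructor. constructor. exact IHn. constructor. constructor.
Qed.

Lemma pevals_proj o v : forall l j, (j + length l = length v)%nat -> l = skipn j v ->
  pevals o (map PProj (seq j (length l))) v l.
Proof.
  induction l; intros j H1 H2; simpl. constructor.
  constructor.
  - apply pe_proj. simpl in H1; lia.
    revert H2. clear. revert v. induction j; intros v H; destruct v; simpl in *; try discriminate.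
    now inversion H. now apply IHj.
  - apply IHl. simpl in H1; lia.
    revert H2. clear. revert v. induction j; intros v H; destruct v; simpl in *; try discriminate.
    now inversion H. now apply IHj.
Qed.

Inductive ex : Type :=
| V (i : nat) | K (n : nat) | Add (a b : ex) | Sub (a b : ex) | Ifz (a b c : ex)
| Rec (b s n : ex) | Orc (a : ex) | Ext (a : ex).

Fixpoint evx (o g : nat -> nat) (env : list nat) (e : ex) : nat :=
  match e with
  | V i => nth i env 0%nat
  | K n => n
  | Add a b => (evx o g env a + evx o g env b)%nat
  | Sub a b => (evx o g env a - evx o g env b)%nat
  | Ifz a b c => match evx o g env a with 0 => evx o g env b | S _ => evx o g env c end
  | Rec b s n => nat_rect (fun _ => nat) (evx o g env b)
                   (fun m acc => evx o g (m :: acc :: env) s) (evx o g env n)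
  | Orc a => o (evx o g env a)
  | Ext a => g (evx o g env a)
  end.

Fixpoint wf (k : nat) (e : ex) : Prop :=
  match e with
  | V i => (i < k)%nat
  | K _ => True
  | Add a b => wf k a /\ wf k b
  | Sub a b => wf k a /\ wf k b
  | Ifz a b c => wf k a /\ wf k b /\ wf k c
  | Rec b s n => wf k b /\ wf (S (S k)) s /\ wf k n
  | Orc a => wf k a
  | Ext a => wf k a
  end.

Theorem compile o g cg : (forall n, peval o cg [n] (g n)) ->
  forall e k, wf k e -> exists c, forall v, length v = k -> peval o c v (evx o g v e).
Proof.
  intros Hg e. induction e; intros k Hw; simpl in Hw.
  - exists (PProj i). intros v Hv. apply pe_proj; simpl; auto; lia.
  - exists (constP n). intros. apply constP_ok.
  - destruct Hw as [H1 H2]. destruct (IHe1 k H1) as [c1 Hc1]. destruct (IHe2 k H2) as [c2 Hc2].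
    exists (PComp addP [c1; c2]). intros v Hv. econstructor.
    constructor. apply Hc1; auto. constructor. apply Hc2; auto. constructor. apply addP_ok.
  - destruct Hw as [H1 H2]. destruct (IHe1 k H1) as [c1 Hc1]. destruct (IHe2 k H2) as [c2 Hc2].
    exists (PComp subP [c1; c2]). intros v Hv. econstructor.
    constructor. apply Hc1; auto. constructor. apply Hc2; auto. constructor. apply subP_ok.
  - destruct Hw as [H1 [H2 H3]]. destruct (IHe1 k H1) as [c1 Hc1]. destruct (IHe2 k H2) as [c2 Hc2].
    destruct (IHe3 k H3) as [c3 Hc3].
    exists (PComp ifzP [c1; c2; c3]). intros v Hv. econstructor.
    constructor. apply Hc1; auto. constructor. apply Hc2; auto. constructor. apply Hc3; auto.
    constructor. apply ifzP_ok.
  - destruct Hw as [H1 [H2 H3]]. destruct (IHe1 k H1) as [c1 Hc1]. destruct (IHe2 _ H2) as [c2 Hc2].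
    destruct (IHe3 k H3) as [c3 Hc3].
    exists (PComp (PPrimRec c1 c2) (c3 :: map PProj (seq 0 k))). intros v Hv.
    apply ev_comp with (ws := evx o g v e3 :: v).
    + constructor. apply Hc3; auto. subst k. apply pevals_proj; auto.
    + cbn [evx]. generalize (evx o g v e3). intro m. induction m; simpl.
      * constructor. apply Hc1; auto.
      * eapply ev_recS. exact IHm. apply Hc2. simpl; lia.
  - destruct (IHe k Hw) as [c1 Hc1]. exists (PComp POracle [c1]). intros v Hv. econstructor.
    constructor. apply Hc1; auto. constructor. constructor.
  - destruct (IHe k Hw) as [c1 Hc1]. exists (PComp cg [c1]). intros v Hv. econstructor.
    constructor. apply Hc1; auto. constructor. apply Hg.
Qed.


Definition parx a := Rec (K 0) (Sub (K 1) (V 1)) a.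
Definition half a := Rec (K 0) (Add (V 1) (parx (V 0))) a.
Definition divp a j := Rec a (half (V 1)) j.
Definition dbl a := Add a a.
Definition mulp a j := Rec a (dbl (V 1)) j.
Definition mod4 a := Add (parx a) (dbl (parx (half a))).

Section S.
Variables o g : nat -> nat.
Notation ev := (evx o g).

Lemma ev_Rec_ind env b s n (F : nat -> nat) : F 0%nat = ev env b ->
  (forall m, F (S m) = ev (m :: F m :: env) s) -> ev env (Rec b s n) = F (ev env n).
Proof. intros H0 HS. cbn [evx]. induction (ev env n) as [|k IH]. cbn [nat_rect]. auto.
  cbn [nat_rect]. rewrite IH. auto. Qed.

Lemma ev_par env a : ev env (parx a) = (ev env a mod 2)%nat.
Proof. unfold parx. apply ev_Rec_ind with (F := fun n => (n mod 2)%nat). auto.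
  intros m. cbn [evx nth]. lia. Qed.
Lemma ev_half env a : ev env (half a) = (ev env a / 2)%nat.
Proof. unfold half. apply ev_Rec_ind with (F := fun n => (n / 2)%nat). auto.
  intros m. cbn [evx nth]. rewrite ev_par. cbn [evx nth]. lia. Qed.
Lemma ev_divp env a j : ev env (divp a j) = (ev env a / 2 ^ ev env j)%nat.
Proof. unfold divp. apply ev_Rec_ind with (F := fun n => (ev env a / 2 ^ n)%nat).
  rewrite Nat.pow_0_r. now rewrite Nat.div_1_r.
  intros m. rewrite ev_half. cbn [evx nth]. rewrite Nat.div_div; try (apply Nat.pow_nonzero; lia); try lia.
  f_equal. rewrite Nat.pow_succ_r'. lia. Qed.
Lemma ev_dbl env a : ev env (dbl a) = (2 * ev env a)%nat.
Proof. unfold dbl; cbn [evx]; lia. Qed.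
Lemma ev_mulp env a j : ev env (mulp a j) = (ev env a * 2 ^ ev env j)%nat.
Proof. unfold mulp. apply ev_Rec_ind with (F := fun n => (ev env a * 2 ^ n)%nat).
  rewrite Nat.pow_0_r. lia.
  intros m. rewrite ev_dbl. cbn [evx nth]. rewrite Nat.pow_succ_r'. lia. Qed.
Lemma ev_mod4 env a : ev env (mod4 a) = (ev env a mod 4)%nat.
Proof. unfold mod4. cbn [evx]. rewrite ev_dbl, !ev_par, ev_half. lia. Qed.
End S.

Lemma wf_par k a : wf k a -> wf k (parx a). Proof. simpl; intuition lia. Qed.
Lemma wf_half k a : wf k a -> wf k (half a). Proof. simpl; intuition lia. Qed.
Lemma wf_divp k a j : wf k a -> wf k j -> wf k (divp a j). Proof. simpl; intuition lia. Qed.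
Lemma wf_dbl k a : wf k a -> wf k (dbl a). Proof. simpl; intuition lia. Qed.
Lemma wf_mulp k a j : wf k a -> wf k j -> wf k (mulp a j). Proof. simpl; intuition lia. Qed.
Lemma wf_mod4 k a : wf k a -> wf k (mod4 a). Proof. simpl; intuition lia. Qed.

Open Scope R_scope.

Lemma Int_part_spec r : IZR (Int_part r) <= r < IZR (Int_part r) + 1.
Proof. destruct (base_Int_part r). lra. Qed.

Lemma Int_part_unique z r : IZR z <= r < IZR z + 1 -> Int_part r = z.
Proof.
  intros [H1 H2]. unfold Int_part.
  assert (up r = (z + 1)%Z). { symmetry. apply tech_up; rewrite plus_IZR; simpl; lra. }
  rewrite H. lia.
Qed.

Definition fl (z : R) (n : nat) : Z := Int_part (z * 2 ^ n).

Lemma fl_spec z n : IZR (fl z n) <= z * 2 ^ n < IZR (fl z n) + 1.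
Proof. apply Int_part_spec. Qed.

Lemma IZR_pow2 n : IZR (2 ^ Z.of_nat n) = 2 ^ n.
Proof. rewrite pow_IZR. reflexivity. Qed.

Lemma pow2_pos n : 0 < 2 ^ n. Proof. apply pow_lt; lra. Qed.

Lemma fl_nest z n j : fl z n = (fl z (n + j) / 2 ^ Z.of_nat j)%Z.
Proof.
  apply Int_part_unique.
  set (F := fl z (n + j)). set (M := (2 ^ Z.of_nat j)%Z).
  assert (HM : (0 < M)%Z) by (apply Z.pow_pos_nonneg; lia).
  pose proof (Z.div_mod F M ltac:(lia)) as Hd. pose proof (Z.mod_pos_bound F M HM) as Hb.
  set (q := (F / M)%Z) in *. set (r := (F mod M)%Z) in *.
  pose proof (fl_spec z (n + j)) as Hs. fold F in Hs. rewrite pow_add in Hs.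
  assert (HMR : IZR M = 2 ^ j) by apply IZR_pow2.
  pose proof (pow2_pos j) as Hp.
  assert (H1 : IZR q * IZR M <= IZR F). { rewrite <- mult_IZR. apply IZR_le. (timeout 10 nia). }
  assert (H2 : IZR F + 1 <= (IZR q + 1) * IZR M).
  { replace 1 with (IZR 1) by reflexivity. rewrite <- plus_IZR, <- plus_IZR, <- mult_IZR. apply IZR_le. (timeout 10 nia). }
  rewrite HMR in H1, H2. split.
  - apply Rmult_le_reg_r with (2 ^ j); auto. lra.
  - apply Rmult_lt_reg_r with (2 ^ j); auto. lra.
Qed.

Lemma fl_shift z m n : fl (z + IZR m) n = (fl z n + m * 2 ^ Z.of_nat n)%Z.
Proof.
  apply Int_part_unique. pose proof (fl_spec z n). rewrite plus_IZR, mult_IZR, IZR_pow2. (timeout 10 nra).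
Qed.

Lemma fl_add a b M : (fl a M + fl b M <= fl (a + b) M <= fl a M + fl b M + 1)%Z.
Proof.
  pose proof (fl_spec a M). pose proof (fl_spec b M). pose proof (fl_spec (a + b) M).
  assert (IZR (fl a M + fl b M) <= (a + b) * 2 ^ M < IZR (fl a M + fl b M) + 2) by (rewrite plus_IZR; (timeout 10 nra)).
  split.
  - assert (IZR (fl a M + fl b M) < IZR (fl (a+b) M) + 1) by lra.
    replace 1 with (IZR 1) in H3 by reflexivity. rewrite <- plus_IZR in H3. apply lt_IZR in H3. lia.
  - assert (IZR (fl (a+b) M) < IZR (fl a M + fl b M) + 2) by lra.
    replace 2 with (IZR 2) in H3 by reflexivity. rewrite <- plus_IZR in H3. apply lt_IZR in H3. lia.
Qed.

Lemma fl_opp z n : IZR (fl z n) < z * 2 ^ n -> fl (- z) n = (- fl z n - 1)%Z.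
Proof.
  intros H. apply Int_part_unique. pose proof (fl_spec z n).
  rewrite minus_IZR, opp_IZR. simpl. lra.
Qed.

Section E.
Variable b : nat -> nat.
Hypothesis hb : forall k, (16 <= b k <= 23)%nat.
Fixpoint Ecnt (K : nat) : nat := match K with 0 => 0%nat | S k => (32 * Ecnt k + b k)%nat end.

Lemma Ecnt_inv K m : (31 * Ecnt (K + m) + 23 <= 32 ^ m * (31 * Ecnt K + 23))%nat.
Proof.
  induction m. rewrite Nat.add_0_r. simpl. lia.
  replace (K + S m)%nat with (S (K + m)) by lia. simpl Ecnt. pose proof (hb (K + m)). rewrite Nat.pow_succ_r'. rewrite <- Nat.mul_assoc. set (X := (32 ^ m * (31 * Ecnt K + 23))%nat) in *. lia.
Qed.

Definition uu (K : nat) : R := INR (Ecnt K) / 32 ^ K.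

Lemma p32_pos K : 0 < 32 ^ K. Proof. apply pow_lt; lra. Qed.

Lemma uu_lt K : uu K < uu (S K).
Proof.
  unfold uu. change (Ecnt (S K)) with (32 * Ecnt K + b K)%nat. pose proof (hb K). pose proof (p32_pos K).
  rewrite plus_INR, mult_INR. change (32 ^ S K) with (32 * 32 ^ K).
  assert (INR (b K) >= 16). { replace 16 with (INR 16) by (simpl; lra). apply Rle_ge, le_INR. lia. }
  replace (INR 32) with 32 by (simpl; lra).
  apply Rmult_lt_reg_r with (32 * 32 ^ K). (timeout 10 nra).
  field_simplify; try lra; try (timeout 10 nra).
Qed.

Lemma uu_mono m K : (m <= K)%nat -> uu m <= uu K.
Proof.
  induction 1. lra. pose proof (uu_lt m0). lra.
Qed.

Definition ub (K : nat) : R := (INR (Ecnt K) + 23 / 31) / 32 ^ K.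

Lemma uu_le_ub m K : uu m <= ub K.
Proof.
  destruct (Nat.le_gt_cases m K).
  - apply Rle_trans with (uu K). now apply uu_mono. unfold uu, ub.
    pose proof (p32_pos K). apply Rmult_le_compat_r. left; apply Rinv_0_lt_compat; auto. lra.
  - replace m with (K + (m - K))%nat by lia. set (d := (m - K)%nat).
    pose proof (Ecnt_inv K d) as Hi. apply le_INR in Hi. rewrite !plus_INR, !mult_INR, pow_INR, plus_INR, mult_INR in Hi.
    unfold uu, ub. rewrite pow_add. pose proof (p32_pos K). pose proof (p32_pos d).
    replace (INR 31) with 31 in Hi by (simpl; lra). replace (INR 23) with 23 in Hi by (simpl; lra).
    replace (INR 32) with 32 in Hi by (simpl; lra).
    apply Rmult_le_reg_r with (32 ^ K * 32 ^ d). (timeout 10 nra).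
    field_simplify; try lra; try (timeout 10 nra).
Qed.

Lemma e_exists : exists e, 0 <= e /\ (forall K, uu K < e) /\ (forall K, e <= ub K).
Proof.
  destruct (completeness (fun r => exists K, r = uu K)) as [e [Hub Hl]].
  - exists (ub 0). intros r [K ->]. apply uu_le_ub.
  - exists (uu 0). eauto.
  - exists e. split; [|split].
    + apply Rle_trans with (uu 0). unfold uu. simpl. lra. apply Hub. eauto.
    + intros K. apply Rlt_le_trans with (uu (S K)). apply uu_lt. apply Hub. eauto.
    + intros K. apply Hl. intros r [m ->]. apply uu_le_ub.
Qed.

Lemma pow32 K : 2 ^ (5 * K) = 32 ^ K.
Proof. rewrite pow_mult. f_equal. simpl. lra. Qed.

Lemma e_props : exists e, 0 <= e /\ (forall K, fl e (5 * K) = Z.of_nat (Ecnt K)) /\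
   (forall n, IZR (fl e n) < e * 2 ^ n).
Proof.
  destruct e_exists as [e [He0 [H1 H2]]]. exists e. split; auto.
  assert (HK : forall K, fl e (5 * K) = Z.of_nat (Ecnt K)).
  { intros K. apply Int_part_unique. rewrite pow32, <- INR_IZR_INZ.
    specialize (H1 K). specialize (H2 K). unfold uu, ub in *. pose proof (p32_pos K).
    apply (Rmult_lt_compat_r (32^K)) in H1; auto. unfold Rdiv in H1. rewrite Rmult_assoc, Rinv_l, Rmult_1_r in H1 by lra.
    apply (Rmult_le_compat_r (32^K)) in H2; [|lra]. unfold Rdiv in H2. rewrite (Rmult_assoc _ (/ _)), Rinv_l, Rmult_1_r in H2 by lra.
    lra. }
  split; auto.
  intros n. destruct (Rle_lt_or_eq _ _ (proj1 (fl_spec e n))) as [H|H]; auto. exfalso.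
  specialize (H1 n). pose proof (HK n) as Hn. pose proof (fl_spec e (5 * n)) as Hs.
  rewrite Hn in Hs.
  assert (e * 2 ^ (5 * n) = IZR (fl e n * 2 ^ Z.of_nat (4 * n))).
  { rewrite mult_IZR, IZR_pow2, H. replace (5 * n)%nat with (n + 4 * n)%nat by lia. rewrite pow_add. ring. }
  unfold uu in H1. rewrite <- pow32 in H1. pose proof (pow2_pos (5 * n)).
  assert (INR (Ecnt n) < e * 2 ^ (5 * n)).
  { apply Rmult_lt_reg_r with (/ 2 ^ (5 * n)). apply Rinv_0_lt_compat; auto.
    rewrite Rmult_assoc, Rinv_r by lra. lra. }
  rewrite H0 in H4, Hs. rewrite INR_IZR_INZ in H4. apply lt_IZR in H4.
  destruct Hs as [_ Hs]. replace 1 with (IZR 1) in Hs by reflexivity. rewrite <- plus_IZR in Hs.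
  apply lt_IZR in Hs. lia.
Qed.
End E.


Definition five (a : ex) := Add a (Add a (Add a (Add a (Add a (K 5))))).
Definition fivem1 (a : ex) := Add a (Add a (Add a (Add a (Add a (K 4))))).
Definition fourp5 (a : ex) := Add a (Add a (Add a (Add a (K 5)))).
Definition Y2val (P : nat) (M : ex) := Ifz (parx (Ext M)) (Add (half (Ext M)) (mulp (K P) M))
   (Sub (mulp (K P) M) (half (Add (Ext M) (K 1)))).
Definition alphaA k := parx (half (Add (Orc (Add k (K 1))) (K 1))).
Definition bbex P k := Add (K 16) (Add (dbl (dbl (alphaA k)))
   (mod4 (Sub (Add (dbl (alphaA k)) (K 4)) (mod4 (Y2val P (five k)))))).
Definition Eex P n := Rec (K 0) (Add (mulp (V 1) (K 5)) (bbex P (V 0))) n.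
Definition progA P := dbl (divp (Add (Y2val P (five (V 0))) (Eex P (Add (V 0) (K 1)))) (fourp5 (V 0))).
Definition progC P := Add (dbl (Add (divp (Eex P (Add (V 0) (K 1))) (fourp5 (V 0))) (mulp (K P) (V 0)))) (K 1).
Definition Xrec c0 (alpha : ex -> ex) n := Rec (K c0) (Ifz (parx (V 1)) (Add (dbl (V 1)) (dbl (alpha (V 0))))
   (Sub (Add (dbl (V 1)) (K 1)) (dbl (alpha (V 0))))) n.
Definition alphaB k := parx (half (Orc (fivem1 k))).
Definition alphaD P k := parx (half (half (Sub (half (Orc (five k))) (mulp (K P) (five k))))).

Lemma wf_progA P : wf 1 (progA P). Proof. cbn; intuition lia. Qed.
Lemma wf_progC P : wf 1 (progC P). Proof. cbn; intuition lia. Qed.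
Lemma wf_progB c0 : wf 1 (Xrec c0 alphaB (V 0)). Proof. cbn; intuition lia. Qed.
Lemma wf_progD c0 P : wf 1 (Xrec c0 (alphaD P) (V 0)). Proof. cbn; intuition lia. Qed.

Section Ev.
Variables o g : nat -> nat.
Notation ev := (evx o g).
Lemma ev_five env a : ev env (five a) = (5 * ev env a + 5)%nat. Proof. cbn [evx five]. lia. Qed.
Lemma ev_fivem1 env a : ev env (fivem1 a) = (5 * ev env a + 4)%nat. Proof. cbn [evx fivem1]. lia. Qed.
Lemma ev_fourp5 env a : ev env (fourp5 a) = (4 * ev env a + 5)%nat. Proof. cbn [evx fourp5]. lia. Qed.
Lemma ev_Y2val env P M : ev env (Y2val P M) =
  match (g (ev env M) mod 2)%nat with 0%nat => (g (ev env M) / 2 + P * 2 ^ ev env M)%nat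
  | S _ => (P * 2 ^ ev env M - (g (ev env M) + 1) / 2)%nat end.
Proof. unfold Y2val. cbn [evx]. rewrite ev_par, !ev_half, ev_mulp. cbn [evx]. reflexivity. Qed.
Lemma ev_alphaA env k : ev env (alphaA k) = (((o (ev env k + 1) + 1) / 2) mod 2)%nat.
Proof. unfold alphaA. rewrite ev_par, ev_half. cbn [evx]. reflexivity. Qed.
Lemma ev_alphaB env k : ev env (alphaB k) = ((o (5 * ev env k + 4) / 2) mod 2)%nat.
Proof. unfold alphaB. rewrite ev_par, ev_half. cbn [evx]. rewrite ev_fivem1. reflexivity. Qed.
Lemma ev_alphaD env P k : ev env (alphaD P k) =
  (((o (5 * ev env k + 5) / 2 - P * 2 ^ (5 * ev env k + 5)) / 2 / 2) mod 2)%nat.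
Proof. unfold alphaD. rewrite ev_par, !ev_half. cbn [evx]. rewrite ev_half, ev_mulp. cbn [evx].
  rewrite !ev_five. reflexivity. Qed.
End Ev.

Fixpoint xr (c0 : nat) (af : nat -> nat) (n : nat) : nat :=
  match n with 0 => c0 | S m => match (xr c0 af m mod 2)%nat with
     0%nat => (2 * xr c0 af m + 2 * af m)%nat | S _ => (2 * xr c0 af m + 1 - 2 * af m)%nat end end.

Section Ev2.
Variables o g : nat -> nat.
Notation ev := (evx o g).
Lemma ev_Eex env P n bbf : (forall m acc, ev (m :: acc :: env) (bbex P (V 0)) = bbf m) ->
  ev env (Eex P n) = Ecnt bbf (ev env n).
Proof. intros H. unfold Eex. apply ev_Rec_ind with (F := Ecnt bbf). reflexivity.
  intros m. cbn [evx]. rewrite ev_mulp, H. cbn [evx nth Ecnt]. simpl (2 ^ 5)%nat. lia. Qed.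
Lemma ev_Xrec env c0 alpha n af : (forall m acc, ev (m :: acc :: env) (alpha (V 0)) = af m) ->
  ev env (Xrec c0 alpha n) = xr c0 af (ev env n).
Proof. intros H. unfold Xrec. apply ev_Rec_ind with (F := xr c0 af). reflexivity.
  intros m. cbn [evx]. rewrite ev_par, !ev_dbl, H. cbn [evx nth xr]. reflexivity. Qed.
End Ev2.

Lemma xr_ok (X : nat -> Z) (af : nat -> nat) :
  (forall k, X (S k) = (2 * X k + Z.of_nat (af k))%Z) -> (forall k, af k <= 1)%nat ->
  forall n, xr (nat_of_Z (X 0%nat)) af n = nat_of_Z (X n).
Proof.
  intros H1 H2 n. induction n. reflexivity.
  cbn [xr]. rewrite IHn, H1. specialize (H2 n). unfold nat_of_Z. destruct (Z.leb_spec 0 (X n)).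
  - replace (Z.to_nat (2 * X n) mod 2)%nat with 0%nat by lia. destruct (Z.leb_spec 0 (2*X n + Z.of_nat (af n))); lia.
  - replace (Z.to_nat (- 2 * X n - 1) mod 2)%nat with 1%nat by lia. destruct (Z.leb_spec 0 (2*X n + Z.of_nat (af n))); lia.
Qed.

Lemma use_ex o g cg (e : ex) (f : nat -> nat) : (forall n, peval o cg [n] (g n)) -> wf 1 e ->
  (forall n, evx o g [n] e = f n) -> oracle_computable f o.
Proof.
  intros Hg Hw Hf. destruct (compile o g cg Hg e 1 Hw) as [c Hc]. exists c. intros n.
  rewrite <- Hf. apply Hc. reflexivity.
Qed.

Lemma use_ex0 o (e : ex) (f : nat -> nat) : wf 1 e ->
  (forall n, evx o (fun _ => 0%nat) [n] e = f n) -> oracle_computable f o.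
Proof. intros. eapply use_ex with (cg := PZero); eauto. intros; constructor. Qed.

Open Scope R_scope.

Lemma alpha_code z : (((nat_of_Z z + 1) / 2) mod 2)%nat = Z.to_nat (z mod 2).
Proof. unfold nat_of_Z. destruct (Z.leb_spec 0 z); lia. Qed.
Lemma y2val z (Q : nat) : (z + Z.of_nat Q >= 0)%Z ->
  (match (nat_of_Z z mod 2)%nat with 0%nat => nat_of_Z z / 2 + Q | S _ => Q - (nat_of_Z z + 1) / 2 end)%nat
  = Z.to_nat (z + Z.of_nat Q).
Proof. unfold nat_of_Z. intros H. destruct (Z.leb_spec 0 z).
  - replace (Z.to_nat (2 * z) mod 2)%nat with 0%nat by lia. lia.
  - replace (Z.to_nat (- 2 * z - 1) mod 2)%nat with 1%nat by lia. lia. Qed.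
Lemma Z_pow2 j : (2 ^ Z.of_nat j)%Z = Z.of_nat (2 ^ j).
Proof. rewrite Nat2Z.inj_pow. reflexivity. Qed.
Lemma nat_of_Z_div (G j : nat) : nat_of_Z (Z.of_nat G / 2 ^ Z.of_nat j) = (2 * (G / 2^j))%nat.
Proof. rewrite Z_pow2, <- Nat2Z.inj_div. generalize (G / 2 ^ j)%nat. intro q. unfold nat_of_Z. rewrite (proj2 (Z.leb_le 0 _)) by lia. lia. Qed.
Lemma divZ_even G j : (0 <= G)%Z -> (G mod 2 = 0)%Z -> (1 <= j)%nat ->
  ((G + 1) / 2 ^ Z.of_nat j = G / 2 ^ Z.of_nat j)%Z.
Proof.
  intros H0 H1 H2. replace (Z.of_nat j) with (1 + Z.of_nat (j - 1))%Z by lia.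
  rewrite Z.pow_add_r by lia. rewrite <- !Z.div_div; try lia; try (apply Z.pow_pos_nonneg; lia).
  f_equal. rewrite Z.pow_1_r. lia.
Qed.

Section Main.
Variables x y : R.

Definition Pn := Z.to_nat (- fl y 0).
Definition y2 := y + IZR (Z.of_nat Pn).
Lemma Y2_eq M : fl y2 M = (fl y M + Z.of_nat Pn * 2 ^ Z.of_nat M)%Z.
Proof. unfold y2. rewrite fl_shift. ring. Qed.
Lemma Y2_nonneg M : (0 <= fl y2 M)%Z.
Proof.
  rewrite Y2_eq. pose proof (fl_nest y 0 M) as H. simpl (0 + M)%nat in H.
  assert (HM : (0 < 2 ^ Z.of_nat M)%Z) by (apply Z.pow_pos_nonneg; lia).
  pose proof (Z.mul_div_le (fl y M) (2 ^ Z.of_nat M) HM). rewrite <- H in H0.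
  unfold Pn. set (a := fl y 0) in *. set (b := (2 ^ Z.of_nat M)%Z) in *.
  assert (Z.of_nat (Z.to_nat (- a)) >= - a)%Z by lia. nia.
Qed.

Definition alpha k := Z.to_nat (fl x (S k) mod 2).
Lemma alpha_le k : (alpha k <= 1)%nat. Proof. unfold alpha. lia. Qed.
Lemma X_step k : fl x (S k) = (2 * fl x k + Z.of_nat (alpha k))%Z.
Proof. unfold alpha. rewrite (fl_nest x k 1). replace (k + 1)%nat with (S k) by lia. simpl (2 ^ Z.of_nat 1)%Z. lia. Qed.

Definition Y2n k := Z.to_nat (fl y2 (5 * k + 5)).
Definition bb k := (16 + 4 * alpha k + (2 * alpha k + 4 - Y2n k mod 4) mod 4)%nat.
Lemma hb k : (16 <= bb k <= 23)%nat. Proof. unfold bb. pose proof (alpha_le k). lia. Qed.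

Section WithE.
Variable e : R.
Hypothesis HeK : forall K, fl e (5 * K) = Z.of_nat (Ecnt bb K).
Hypothesis Hen : forall n, IZR (fl e n) < e * 2 ^ n.

Definition t1 := y2 + e.
Definition t2 := - IZR (Z.of_nat Pn) - e.
Definition GG K := (Z.to_nat (fl y2 (5 * K)) + Ecnt bb K)%nat.

Lemma GG_mod k : (GG (S k) mod 4 = 2 * alpha k)%nat.
Proof. unfold GG. replace (5 * S k)%nat with (5 * k + 5)%nat by lia. fold (Y2n k).
  cbn [Ecnt]. unfold bb. pose proof (alpha_le k). lia. Qed.

Lemma fl_t1_range K : (Z.of_nat (GG K) <= fl t1 (5 * K) <= Z.of_nat (GG K) + 1)%Z.
Proof. unfold t1, GG. pose proof (fl_add y2 e (5 * K)). rewrite HeK in H. pose proof (Y2_nonneg (5*K)). lia. Qed.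

Lemma fl_t1 n j K : (n + j = 5 * K)%nat -> (1 <= j)%nat -> fl t1 n = (Z.of_nat (GG K) / 2 ^ Z.of_nat j)%Z.
Proof.
  intros H1 H2. rewrite (fl_nest t1 n j), H1. destruct K as [|k]. lia.
  pose proof (GG_mod k). pose proof (fl_t1_range (S k)).
  assert (fl t1 (5 * S k) = Z.of_nat (GG (S k)) \/ fl t1 (5 * S k) = (Z.of_nat (GG (S k)) + 1)%Z) as [E|E] by lia;
  rewrite E; auto. apply divZ_even; lia.
Qed.

Lemma oracle_t2 M : real_oracle t2 M = (2 * (Z.to_nat (fl e M) + Pn * 2 ^ M) + 1)%nat.
Proof.
  change (real_oracle t2 M) with (nat_of_Z (fl t2 M)).
  assert (Ht : t2 = - (e + IZR (Z.of_nat Pn))) by (unfold t2; ring). rewrite Ht.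
  rewrite fl_opp. rewrite fl_shift.
  - assert (0 <= fl e M)%Z.
    { pose proof (fl_nest e M (4 * M)). replace (M + 4 * M)%nat with (5 * M)%nat in H by lia.
      rewrite HeK in H. rewrite H. apply Z.div_pos. lia. apply Z.pow_pos_nonneg; lia. }
    unfold nat_of_Z. rewrite Z_pow2, <- Nat2Z.inj_mul. generalize (Pn * 2 ^ M)%nat. intro q.
    rewrite (proj2 (Z.leb_gt 0 _)) by lia. lia.
  - rewrite fl_shift, plus_IZR, mult_IZR, IZR_pow2. specialize (Hen M). lra.
Qed.

Lemma fl_e n : fl e n = (Z.of_nat (Ecnt bb (S n)) / 2 ^ Z.of_nat (4 * n + 5))%Z.
Proof. rewrite (fl_nest e n (4 * n + 5)). replace (n + (4 * n + 5))%nat with (5 * S n)%nat by lia. now rewrite HeK. Qed.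

Variable c : prf.
Hypothesis Hc : forall n, peval (real_oracle x) c [n] (real_oracle y n).

Lemma Y2val_ok env M : evx (real_oracle x) (real_oracle y) env (Y2val Pn M) = Z.to_nat (fl y2 (evx (real_oracle x) (real_oracle y) env M)).
Proof.
  rewrite ev_Y2val. set (m := evx _ _ env M). change (real_oracle y m) with (nat_of_Z (fl y m)).
  rewrite y2val. rewrite Y2_eq. f_equal. rewrite Nat2Z.inj_mul, Nat2Z.inj_pow. reflexivity.
  pose proof (Y2_nonneg m). rewrite Y2_eq in H. rewrite Nat2Z.inj_mul, Nat2Z.inj_pow. simpl (Z.of_nat 2). lia.
Qed.

Lemma bb_ok env m acc : evx (real_oracle x) (real_oracle y) (m :: acc :: env) (bbex Pn (V 0)) = bb m.
Proof.
  unfold bbex. do 3 (cbn [evx nth]; rewrite ?ev_dbl, ?ev_mod4, ?ev_alphaA, ?Y2val_ok, ?ev_five). cbn [evx nth].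
  change (real_oracle x (m + 1)) with (nat_of_Z (fl x (m + 1))). rewrite alpha_code.
  replace (m + 1)%nat with (S m) by lia. fold (alpha m).
  replace (5 * m + 5)%nat with (5 * m + 5)%nat by lia. fold (Y2n m). unfold bb. lia.
Qed.

Lemma t1_le_x : turing_le t1 x.
Proof.
  unfold turing_le. apply use_ex with (cg := c) (g := real_oracle y) (e := progA Pn); auto.
  apply wf_progA. intros n. unfold progA.
  rewrite ev_dbl, ev_divp. cbn [evx]. rewrite Y2val_ok, ev_five, ev_fourp5.
  rewrite (ev_Eex _ _ _ _ _ bb) by apply bb_ok. cbn [evx nth].
  change (real_oracle t1 n) with (nat_of_Z (fl t1 n)).
  rewrite (fl_t1 n (4 * n + 5) (S n)) by lia. rewrite nat_of_Z_div. unfold GG.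
  replace (5 * S n)%nat with (5 * n + 5)%nat by lia. replace (n + 1)%nat with (S n) by lia. reflexivity.
Qed.

Lemma t2_le_x : turing_le t2 x.
Proof.
  unfold turing_le. apply use_ex with (cg := c) (g := real_oracle y) (e := progC Pn); auto.
  apply wf_progC. intros n. unfold progC.
  do 3 (cbn [evx nth]; rewrite ?ev_dbl, ?ev_mulp, ?ev_divp, ?ev_fourp5).
  rewrite (ev_Eex _ _ _ _ _ bb) by apply bb_ok. cbn [evx nth].
  rewrite oracle_t2, fl_e. replace (n + 1)%nat with (S n) by lia.
  rewrite Z_pow2, <- Nat2Z.inj_div. rewrite Nat2Z.id. lia.
Qed.

Lemma x_le_t1 : turing_le x t1.
Proof.
  unfold turing_le. apply use_ex0 with (e := Xrec (nat_of_Z (fl x 0)) alphaB (V 0)).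
  apply wf_progB. intros n.
  rewrite (ev_Xrec _ _ _ _ _ _ alpha). cbn [evx nth]. apply xr_ok. apply X_step. apply alpha_le.
  intros m acc. rewrite ev_alphaB. cbn [evx nth].
  change (real_oracle t1 (5 * m + 4)) with (nat_of_Z (fl t1 (5 * m + 4))).
  rewrite (fl_t1 (5 * m + 4) 1 (S m)) by lia. rewrite nat_of_Z_div. pose proof (GG_mod m). simpl (2 ^ 1)%nat. lia.
Qed.

Lemma x_le_t2 : turing_le x t2.
Proof.
  unfold turing_le. apply use_ex0 with (e := Xrec (nat_of_Z (fl x 0)) (alphaD Pn) (V 0)).
  apply wf_progD. intros n.
  rewrite (ev_Xrec _ _ _ _ _ _ alpha). cbn [evx nth]. apply xr_ok. apply X_step. apply alpha_le.
  intros m acc. rewrite ev_alphaD. cbn [evx nth].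
  rewrite oracle_t2. replace (5 * m + 5)%nat with (5 * S m)%nat by lia. rewrite HeK, Nat2Z.id.
  cbn [Ecnt]. unfold bb. pose proof (alpha_le m). set (Q := (Pn * 2 ^ (5 * S m))%nat). lia.
Qed.
End WithE.
End Main.

Theorem mainTheorem3 (x y : R) :
  turing_le y x ->
  exists l : list R, y = sum_list l /\ Forall (fun z => turing_equiv z x) l.
Proof.
  intros Hc. destruct Hc as [c Hc].
  destruct (e_props (bb x y) (hb x y)) as [e [He0 [HeK Hen]]].
  exists [t1 y e; t2 y e]. split.
  - simpl. unfold t1, t2, y2. ring.
  - constructor; [|constructor; [|constructor]]; split.
    + eapply t1_le_x; eauto.
    + eapply x_le_t1; eauto.
    + eapply t2_le_x; eauto.
    + eapply x_le_t2; eauto.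
Qed.
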